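(* Let $S_\lambda\in\mathcal B(\ell^2(V))$ be a weighted shift on a directed tree $\mathcal T=(V,E)$ with weights $\lambda=\{\lambda_v\}_{v\in V^\circ}$. Then $S_\lambda^*S_\lambda(\ker S_\lambda^* )\subseteq\ker S_\lambda^*$ if and only if there exists a family $\{\alpha_v\}_{v\in V^+_\lambda}\subseteq\mathbb R_+$ with $\|S_\lambda e_u\|=\alpha_{\mathrm{par}(u)}$ for all $u\in V^\circ$ with $\lambda_u\neq0$. Moreover, if $\mathcal T$ is leafless and all weights are nonzero, this is equivalent to the existence of $\{\alpha_v\}_{v\in V}\subseteq\mathbb R_+$ with $\|S_\lambda e_u\|=\alpha_{\mathrm{par}(u)}$ for all $u\in V^\circ$.
   Context: A directed tree $\mathcal T=(V,E)$ is a connected directed graph without circuits in which each vertex has at most one parent; a root is a vertex without parent (at most one exists). $V^\circ=V$ if $\mathcal T$ is rootless and $V^\circ=V\setminus\{\omega\}$ if $\omega$ is the root. For $v\in V^\circ$, $\mathrm{par}(v)$ is the unique $u$ with $(u,v)\in E$; $\mathrm{Chi}(u)=\{v:(u,v)\in E\}$; $\mathcal T$ is leafless if $\mathrm{Chi}(u)\neq\emptyset$ for all $u$. $e_u$ is the indicator of $\{u\}$ in $\ell^2(V)$. The weighted shift with weights $\lambda$ is $(S_\lambda f)(v)=\lambda_vf(\mathrm{par}(v))$ for $v\in V^\circ$ and $(S_\lambda f)(\omega)=0$ at the root; it is bounded iff $\sup_u\sum_{v\in\mathrm{Chi}(u)}|\lambda_v|^2<\infty$, and then $\|S_\lambda e_u\|^2=\sum_{v\in\mathrm{Chi}(u)}|\lambda_v|^2$.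 $V^+_\lambda=\{u\in V:\|S_\lambda e_u\|>0\}$. *)

(* Defs.v *)
From Stdlib Require Import Reals List Relations ClassicalEpsilon.
Import ListNotations.
Open Scope R_scope.

Record Cplx : Type := mkC { Re : R; Im : R }.
Definition C0 : Cplx := mkC 0 0.
Definition C1 : Cplx := mkC 1 0.
Definition Cadd (z w : Cplx) : Cplx := mkC (Re z + Re w) (Im z + Im w).
Definition Copp (z : Cplx) : Cplx := mkC (- Re z) (- Im z).
Definition Cmul (z w : Cplx) : Cplx :=
  mkC (Re z * Re w - Im z * Im w) (Re z * Im w + Im z * Re w).
Definition Cconj (z : Cplx) : Cplx := mkC (Re z) (- Im z).
Definition Cnorm2 (z : Cplx) : R := Re z * Re z + Im z * Im z.

Definition sumR {V : Type} (F : list V) (g : V -> R) : R :=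
  fold_right (fun v acc => g v + acc) 0 F.
Definition sumC {V : Type} (F : list V) (g : V -> Cplx) : Cplx :=
  fold_right (fun v acc => Cadd (g v) acc) C0 F.

(** [g] is (unconditionally) summable over [V] with sum [s]: the net of
    finite partial sums (indexed by finite subsets, encoded as duplicate-free
    lists) converges to [s]. *)
Definition has_sumR {V : Type} (g : V -> R) (s : R) : Prop :=
  forall eps, 0 < eps ->
    exists F0 : list V, NoDup F0 /\
      forall F : list V, NoDup F -> incl F0 F -> Rabs (sumR F g - s) < eps.

Definition has_sumC {V : Type} (g : V -> Cplx) (s : Cplx) : Prop :=
  forall eps, 0 < eps ->
    exists F0 : list V, NoDup F0 /\
      forall F : list V, NoDup F -> incl F0 F ->
        Cnorm2 (Cadd (sumC F g) (Copp s)) < eps * eps.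

Definition l2 {V : Type} (f : V -> Cplx) : Prop :=
  exists s, has_sumR (fun v => Cnorm2 (f v)) s.

Definition norm_is {V : Type} (f : V -> Cplx) (r : R) : Prop :=
  0 <= r /\ has_sumR (fun v => Cnorm2 (f v)) (r * r).

Definition inner_is {V : Type} (f g : V -> Cplx) (s : Cplx) : Prop :=
  has_sumC (fun v => Cmul (f v) (Cconj (g v))) s.

Definition e_ {V : Type} (u : V) : V -> Cplx :=
  fun v => if excluded_middle_informative (v = u) then C1 else C0.

(** * Directed trees
    A directed graph in which every vertex has at most one parent is encoded
    by [par : V -> option V]; the edge set is E = {(u,v) | par v = Some u}.
    [par v = None] means v is the root (so V^o = {v | par v <> None}). *)
Definition Edge {V : Type} (par : V -> option V) : relation V :=
  fun u v => par v = Some u.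

Definition is_directed_tree {V : Type} (par : V -> option V) : Prop :=
  (forall u w : V, clos_refl_sym_trans V (Edge par) u w) /\
  (forall u : V, ~ clos_trans V (Edge par) u u).

Definition leafless {V : Type} (par : V -> option V) : Prop :=
  forall u : V, exists v : V, par v = Some u.

(** * Weighted shifts
    (S_lambda f)(v) = lambda_v f(par v) for v in V^o, and 0 at the root.
    Only the values of [lam] on V^o are relevant. *)
Definition wshift {V : Type} (par : V -> option V) (lam : V -> Cplx)
  (f : V -> Cplx) : V -> Cplx :=
  fun v => match par v with Some u => Cmul (lam v) (f u) | None => C0 end.

Definition bounded_op {V : Type} (S : (V -> Cplx) -> (V -> Cplx)) : Prop :=
  exists M : R, forall f, l2 f ->
    l2 (S f) /\ forall a b, norm_is f a -> norm_is (S f) b -> b <= M * a.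

(** [adj_val S f h] : h in l^2(V) is the value S^* f of the adjoint at f,
    i.e. <S g, f> = <g, h> for every g in l^2(V). *)
Definition adj_val {V : Type} (S : (V -> Cplx) -> (V -> Cplx)) (f h : V -> Cplx) : Prop :=
  l2 h /\ forall g, l2 g -> exists s, inner_is (S g) f s /\ inner_is g h s.

Definition in_ker_adj {V : Type} (S : (V -> Cplx) -> (V -> Cplx)) (f : V -> Cplx) : Prop :=
  l2 f /\ adj_val S f (fun _ => C0).

Definition adjS_S_preserves_ker {V : Type} (S : (V -> Cplx) -> (V -> Cplx)) : Prop :=
  forall f, in_ker_adj S f -> forall h, adj_val S (S f) h -> in_ker_adj S h.

Definition Vplus {V : Type} (S : (V -> Cplx) -> (V -> Cplx)) (u : V) : Prop :=
  exists r, norm_is (S (e_ u)) r /\ 0 < r.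

(* Main.v *)
Require Import Defs.
From Stdlib Require Import Reals Lra Lia Psatz List Permutation Classical ClassicalEpsilon FunctionalExtensionality.
Import ListNotations.
Open Scope R_scope.

Section Sums.
Context {V : Type}.

Lemma sumR_app (F G : list V) g : sumR (F ++ G) g = sumR F g + sumR G g.
Proof. induction F; simpl; [lra| rewrite IHF; lra]. Qed.

Lemma sumR_perm (F G : list V) g : Permutation F G -> sumR F g = sumR G g.
Proof. induction 1; simpl; lra. Qed.

Lemma sumR_zero (F : list V) g : (forall v, In v F -> g v = 0) -> sumR F g = 0.
Proof. induction F; simpl; intros H; [lra|]. rewrite H by auto. rewrite IHF by auto. lra. Qed.

Lemma sumR_nonneg (F : list V) g : (forall v, 0 <= g v) -> 0 <= sumR F g.
Proof. induction F; simpl; intros H; [lra|]. specialize (IHF H). specialize (H a). lra. Qed.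

Lemma sumR_le (F : list V) g h : (forall v, g v <= h v) -> sumR F g <= sumR F h.
Proof. induction F; simpl; intros H; [lra|]. specialize (IHF H). specialize (H a). lra. Qed.

Lemma sumR_plus (F : list V) g h : sumR F (fun v => g v + h v) = sumR F g + sumR F h.
Proof. induction F; simpl; lra. Qed.

Lemma sumR_scal (F : list V) c g : sumR F (fun v => c * g v) = c * sumR F g.
Proof. induction F; simpl; [lra|]. rewrite IHF. ring. Qed.

Lemma nodup_union_aux (l : list V) : exists H, NoDup H /\ forall x, In x H <-> In x l.
Proof.
  induction l as [|a l [H [HN HI]]].
  - exists []. split; [constructor| tauto].
  - destruct (classic (In a H)) as [Ha|Ha].
    + exists H. split; auto. intros x; simpl; rewrite HI. split; [tauto|].
      intros [->|?]; [apply HI in Ha|]; tauto.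
    + exists (a :: H). split; [constructor; auto|]. intros x; simpl; rewrite HI; tauto.
Qed.

Lemma nodup_union (F G : list V) : exists H, NoDup H /\ incl F H /\ incl G H.
Proof.
  destruct (nodup_union_aux (F ++ G)) as [H [HN HI]]. exists H.
  repeat split; auto; intros x Hx; apply HI; apply in_or_app; auto.
Qed.

Lemma nodup_split (L F : list V) : NoDup L -> NoDup F -> incl L F ->
  exists R, Permutation F (L ++ R) /\ (forall v, In v R -> ~ In v L).
Proof.
  intros HL HF HI.
  set (p := fun x => if excluded_middle_informative (In x L) then false else true).
  exists (filter p F). split.
  - apply NoDup_Permutation; auto.
    + apply NoDup_app; auto. apply NoDup_filter; auto.
      intros a Ha Hb. apply filter_In in Hb. destruct Hb as [_ Hb]. unfold p in Hb.
      destruct (excluded_middle_informative (In a L)); [congruence|tauto].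
    + intros x. rewrite in_app_iff, filter_In. unfold p.
      destruct (excluded_middle_informative (In x L)) as [Hx|Hx].
      * split; [tauto|]. intros [H|[_ H]]; [apply HI; auto| discriminate].
      * split; [tauto|]. intros [H|[H _]]; [apply HI|]; auto.
  - intros v Hv. apply filter_In in Hv. destruct Hv as [_ Hv]. unfold p in Hv.
    destruct (excluded_middle_informative (In v L)); [congruence|tauto].
Qed.

Lemma sumR_mono (L F : list V) g : (forall v, 0 <= g v) -> NoDup L -> NoDup F -> incl L F ->
  sumR L g <= sumR F g.
Proof.
  intros Hg HL HF HI. destruct (nodup_split L F HL HF HI) as [R [HP _]].
  rewrite (sumR_perm _ _ g HP), sumR_app. pose proof (sumR_nonneg R g Hg). lra.
Qed.

Lemma has_sumR_unique (g : V -> R) s1 s2 : has_sumR g s1 -> has_sumR g s2 -> s1 = s2.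
Proof.
  intros H1 H2. destruct (Req_dec s1 s2) as [|Hne]; auto. exfalso.
  assert (He : 0 < Rabs (s1 - s2) / 2) by (assert (s1 - s2 <> 0) by lra; pose proof (Rabs_pos_lt _ H); lra).
  destruct (H1 _ He) as [F1 [N1 P1]]. destruct (H2 _ He) as [F2 [N2 P2]].
  destruct (nodup_union F1 F2) as [H [NH [I1 I2]]].
  specialize (P1 H NH I1). specialize (P2 H NH I2).
  revert P1 P2. unfold Rdiv. split_Rabs; lra.
Qed.

Lemma has_sumR_finite (L : list V) g : NoDup L -> (forall v, ~ In v L -> g v = 0) ->
  has_sumR g (sumR L g).
Proof.
  intros HL Hz eps He. exists L. split; auto. intros F HF HI.
  destruct (nodup_split L F HL HF HI) as [R [HP HR]].
  rewrite (sumR_perm _ _ g HP), sumR_app, (sumR_zero R) by (intros v Hv; apply Hz; auto).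
  replace (sumR L g + 0 - sumR L g) with 0 by ring. rewrite Rabs_R0; auto.
Qed.

Lemma has_sumR_plus (g h : V -> R) a b : has_sumR g a -> has_sumR h b ->
  has_sumR (fun v => g v + h v) (a + b).
Proof.
  intros Hg Hh eps He.
  destruct (Hg (eps/2)) as [F1 [N1 P1]]; [lra|]. destruct (Hh (eps/2)) as [F2 [N2 P2]]; [lra|].
  destruct (nodup_union F1 F2) as [H [NH [I1 I2]]]. exists H. split; auto.
  intros F NF IF. rewrite sumR_plus.
  assert (A1 := P1 F NF (fun x Hx => IF x (I1 x Hx))).
  assert (A2 := P2 F NF (fun x Hx => IF x (I2 x Hx))).
  revert A1 A2. split_Rabs; lra.
Qed.

Lemma has_sumR_scal c (g : V -> R) a : has_sumR g a -> has_sumR (fun v => c * g v) (c * a).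
Proof.
  intros Hg eps He.
  assert (Hc : 0 < Rabs c + 1) by (pose proof (Rabs_pos c); lra).
  destruct (Hg (eps / (Rabs c + 1))) as [F0 [N0 P0]].
  { apply Rdiv_lt_0_compat; lra. }
  exists F0. split; auto. intros F NF IF. specialize (P0 F NF IF).
  rewrite sumR_scal. replace (c * sumR F g - c * a) with (c * (sumR F g - a)) by ring.
  rewrite Rabs_mult.
  assert (Rabs (sumR F g - a) * (Rabs c + 1) < eps).
  { apply (Rmult_lt_compat_r (Rabs c + 1)) in P0; auto.
    unfold Rdiv in P0. rewrite Rmult_assoc, Rinv_l in P0; lra. }
  pose proof (Rabs_pos c). pose proof (Rabs_pos (sumR F g - a)). nra.
Qed.

Lemma has_sumR_ext (g h : V -> R) s : (forall v, g v = h v) -> has_sumR g s -> has_sumR h s.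
Proof. intros E. replace h with g; auto. apply functional_extensionality; auto. Qed.

Lemma has_sumR_bound (g : V -> R) s : (forall v, 0 <= g v) -> has_sumR g s ->
  forall F, NoDup F -> sumR F g <= s.
Proof.
  intros Hg Hs F NF. apply Rnot_lt_le. intros Hlt.
  destruct (Hs (sumR F g - s)) as [F0 [N0 P0]]; [lra|].
  destruct (nodup_union F F0) as [H [NH [I1 I2]]].
  specialize (P0 H NH I2). pose proof (sumR_mono F H g Hg NF NH I1).
  revert P0. split_Rabs; lra.
Qed.

Lemma has_sumR_nonneg (g : V -> R) s : (forall v, 0 <= g v) -> has_sumR g s -> 0 <= s.
Proof. intros Hg Hs. apply (has_sumR_bound g s Hg Hs [] (NoDup_nil _)). Qed.

Lemma has_sumR_term (g : V -> R) s : (forall v, 0 <= g v) -> has_sumR g s -> forall v, g v <= s.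
Proof.
  intros Hg Hs v. pose proof (has_sumR_bound g s Hg Hs [v]) as H.
  simpl in H. assert (NoDup [v]) by (constructor; [simpl; tauto| constructor]). specialize (H H0). lra.
Qed.

Lemma has_sumR_compare (a b : V -> R) s : (forall v, 0 <= a v <= b v) -> has_sumR b s ->
  exists t, has_sumR a t.
Proof.
  intros Hab Hb.
  set (E := fun x => exists F, NoDup F /\ x = sumR F a).
  assert (Hbd : bound E).
  { exists s. intros x [F [NF ->]].
    apply Rle_trans with (sumR F b). apply sumR_le; intros; apply Hab.
    apply has_sumR_bound; auto. intros v; specialize (Hab v); lra. }
  assert (Hne : exists x, E x) by (exists 0; exists []; split; [constructor| reflexivity]).
  destruct (completeness E Hbd Hne) as [m [Hub Hlub]].
  exists m. intros eps He.
  assert (exists F, NoDup F /\ m - eps < sumR F a) as [F1 [N1 P1]].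
  { apply NNPP. intros Hn. assert (m <= m - eps); [|lra].
    apply Hlub. intros x [F [NF ->]]. apply Rnot_lt_le. intros Hl. apply Hn. eauto. }
  exists F1. split; auto. intros F NF IF.
  assert (sumR F1 a <= sumR F a) by (apply sumR_mono; auto; intros v; apply Hab).
  assert (sumR F a <= m) by (apply Hub; exists F; auto).
  split_Rabs; lra.
Qed.

Lemma Cplx_eq (z w : Cplx) : Re z = Re w -> Im z = Im w -> z = w.
Proof. destruct z, w; simpl; intros; subst; reflexivity. Qed.

Lemma Re_sumC (F : list V) g : Re (sumC F g) = sumR F (fun v => Re (g v)).
Proof. induction F; simpl; auto. rewrite IHF; auto. Qed.
Lemma Im_sumC (F : list V) g : Im (sumC F g) = sumR F (fun v => Im (g v)).
Proof. induction F; simpl; auto. rewrite IHF; auto. Qed.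

Lemma abs_lt_sq x eps : 0 < eps -> (Rabs x < eps <-> x * x < eps * eps).
Proof. intros He. split_Rabs; split; intros; nra. Qed.

Lemma has_sumC_iff (g : V -> Cplx) s : has_sumC g s <->
  has_sumR (fun v => Re (g v)) (Re s) /\ has_sumR (fun v => Im (g v)) (Im s).
Proof.
  unfold has_sumC, has_sumR, Cnorm2. split.
  - intros H. split; intros eps He; destruct (H eps He) as [F0 [N0 P0]];
      exists F0; split; auto; intros F NF IF; specialize (P0 F NF IF);
      simpl in P0; rewrite Re_sumC, Im_sumC in P0; apply abs_lt_sq; auto;
      match type of P0 with ?a * ?a + ?b * ?b < _ => pose proof (Rle_0_sqr a); pose proof (Rle_0_sqr b); unfold Rsqr in *; lra end.
  - intros [H1 H2] eps He.
    destruct (H1 (eps/2)) as [F1 [N1 P1]]; [lra|]. destruct (H2 (eps/2)) as [F2 [N2 P2]]; [lra|].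
    destruct (nodup_union F1 F2) as [H [NH [I1 I2]]]. exists H. split; auto.
    intros F NF IF.
    assert (A1 := P1 F NF (fun x Hx => IF x (I1 x Hx))).
    assert (A2 := P2 F NF (fun x Hx => IF x (I2 x Hx))).
    apply abs_lt_sq in A1; [|lra]. apply abs_lt_sq in A2; [|lra].
    simpl. rewrite Re_sumC, Im_sumC. nra.
Qed.

Lemma has_sumC_unique (g : V -> Cplx) s1 s2 : has_sumC g s1 -> has_sumC g s2 -> s1 = s2.
Proof.
  rewrite !has_sumC_iff. intros [A1 B1] [A2 B2]. apply Cplx_eq;
  eapply has_sumR_unique; eauto.
Qed.

Lemma has_sumC_ext (g h : V -> Cplx) s : (forall v, g v = h v) -> has_sumC g s -> has_sumC h s.
Proof. intros E. replace h with g; auto. apply functional_extensionality; auto. Qed.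

Lemma has_sumC_finite (L : list V) g : NoDup L -> (forall v, ~ In v L -> g v = C0) ->
  has_sumC g (sumC L g).
Proof.
  intros HL Hz. apply has_sumC_iff. rewrite Re_sumC, Im_sumC.
  split; apply has_sumR_finite; auto; intros v Hv; rewrite Hz; auto.
Qed.

Lemma has_sumC_plus (g h : V -> Cplx) a b : has_sumC g a -> has_sumC h b ->
  has_sumC (fun v => Cadd (g v) (h v)) (Cadd a b).
Proof.
  rewrite !has_sumC_iff. intros [A1 B1] [A2 B2]. simpl.
  split; [apply (has_sumR_plus _ _ _ _ A1 A2)| apply (has_sumR_plus _ _ _ _ B1 B2)].
Qed.

Lemma has_sumC_rscal (phi : V -> R) a z : has_sumR phi a ->
  has_sumC (fun v => Cmul (mkC (phi v) 0) z) (Cmul (mkC a 0) z).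
Proof.
  intros H. apply has_sumC_iff. simpl. split.
  - apply (has_sumR_ext (fun v => Re z * phi v)); [intros; ring|].
    replace (a * Re z - 0 * Im z) with (Re z * a) by ring. apply has_sumR_scal; auto.
  - apply (has_sumR_ext (fun v => Im z * phi v)); [intros; ring|].
    replace (a * Im z + 0 * Re z) with (Im z * a) by ring. apply has_sumR_scal; auto.
Qed.

End Sums.
Ltac dem := repeat match goal with
  | |- context [excluded_middle_informative ?P] => destruct (excluded_middle_informative P)
  | H : context [excluded_middle_informative ?P] |- _ => destruct (excluded_middle_informative P)
  end.
Ltac ceq := apply Cplx_eq; simpl; unfold Cnorm2; simpl; ring.
Ltac fixsome := repeat match goal with H : Some _ = Some _ |- _ => injection H as H end; subst.
Section Op.
Context {V : Type} (par : V -> option V) (lam : V -> Cplx).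
Context (Hbdd : bounded_op (wshift par lam)).
Notation S := (wshift par lam).

Definition nn (u v : V) : R :=
  if excluded_middle_informative (par v = Some u) then Cnorm2 (lam v) else 0.

Lemma Cnorm2_nonneg z : 0 <= Cnorm2 z.
Proof. unfold Cnorm2. nra. Qed.

Lemma Cnorm2_C0 : Cnorm2 C0 = 0.
Proof. unfold Cnorm2; simpl; ring. Qed.

Lemma Cnorm2_pos z : z <> C0 -> 0 < Cnorm2 z.
Proof.
  intros H. destruct z as [a b]. unfold Cnorm2; simpl.
  destruct (Req_dec a 0); destruct (Req_dec b 0); subst; [exfalso; apply H; reflexivity| nra..].
Qed.

Lemma Se_norm (u v : V) : Cnorm2 (S (e_ u) v) = nn u v.
Proof.
  unfold wshift, nn, e_. destruct (par v) as [q|] eqn:E; dem; subst; try congruence;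
  unfold Cnorm2; simpl; ring.
Qed.

Lemma e_norm (u : V) : norm_is (e_ u) 1.
Proof.
  split; [lra|]. replace (1 * 1) with (sumR [u] (fun v => Cnorm2 (e_ u v))).
  - apply has_sumR_finite. constructor; [simpl; tauto| constructor].
    intros v Hv. unfold e_. dem; [subst; simpl in Hv; tauto| apply Cnorm2_C0].
  - simpl. unfold e_. dem; [|congruence]. unfold Cnorm2; simpl; ring.
Qed.

Lemma l2_of_norm (f : V -> Cplx) r : norm_is f r -> l2 f.
Proof. intros [_ H]. eexists; eauto. Qed.

Lemma norm_of_l2 (f : V -> Cplx) : l2 f -> exists r, norm_is f r.
Proof.
  intros [s Hs]. assert (0 <= s) by (eapply has_sumR_nonneg; [intros; apply Cnorm2_nonneg| eauto]).
  exists (sqrt s). split; [apply sqrt_pos|]. rewrite sqrt_sqrt; auto.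
Qed.

Lemma norm_unique (f : V -> Cplx) r1 r2 : norm_is f r1 -> norm_is f r2 -> r1 = r2.
Proof.
  intros [P1 H1] [P2 H2]. pose proof (has_sumR_unique _ _ _ H1 H2). nra.
Qed.

Lemma ex_norm (u : V) : exists r, norm_is (S (e_ u)) r.
Proof.
  destruct Hbdd as [M HM]. apply norm_of_l2. apply HM. eapply l2_of_norm, e_norm.
Qed.

Definition nrm (u : V) : R := proj1_sig (constructive_indefinite_description _ (ex_norm u)).

Lemma nrm_spec (u : V) : norm_is (S (e_ u)) (nrm u).
Proof. unfold nrm. destruct (constructive_indefinite_description _ _); auto. Qed.

Lemma nrm_bound : exists K, forall u, 0 <= nrm u <= K.
Proof.
  destruct Hbdd as [M HM]. exists M. intros u. pose proof (nrm_spec u) as Hn.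
  split; [apply Hn|]. destruct (HM (e_ u)) as [_ HB]; [eapply l2_of_norm, e_norm|].
  specialize (HB 1 (nrm u) (e_norm u) Hn). lra.
Qed.

Lemma nn_sum (u : V) : has_sumR (nn u) (nrm u * nrm u).
Proof.
  destruct (nrm_spec u) as [_ H]. exact (has_sumR_ext _ _ _ (Se_norm u) H).
Qed.

Lemma Vplus_child (u p : V) : par u = Some p -> lam u <> C0 -> Vplus S p.
Proof.
  intros Hp Hl. exists (nrm p). split; [apply nrm_spec|].
  destruct (nrm_spec p) as [Hn _]. destruct Hn as [Hn|Hn]; auto. exfalso.
  pose proof (has_sumR_term (nn p) _ ltac:(intros; unfold nn; dem; [apply Cnorm2_nonneg|lra]) (nn_sum p) u).
  unfold nn in H. dem; [|congruence]. pose proof (Cnorm2_pos _ Hl). rewrite <- Hn in H. lra.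
Qed.

Definition ch_ex (p : V) := exists u, par u = Some p /\ lam u <> C0.

Definition cc (p : V) : R :=
  match excluded_middle_informative (ch_ex p) with
  | left H => nrm (proj1_sig (constructive_indefinite_description _ H))
  | right _ => 0 end.

Lemma cc_bound : exists K, forall p, 0 <= cc p <= K.
Proof.
  destruct nrm_bound as [K HK]. exists K. intros p. unfold cc.
  destruct (excluded_middle_informative (ch_ex p)) as [H|H].
  - apply HK.
  - specialize (HK p). lra.
Qed.

Lemma cc_eq : (forall u w p, par u = Some p -> par w = Some p -> lam u <> C0 -> lam w <> C0 ->
   nrm u = nrm w) -> forall v p, par v = Some p -> lam v <> C0 -> cc p = nrm v.
Proof.
  intros Heq v p Hp Hl. unfold cc.
  destruct (excluded_middle_informative (ch_ex p)) as [H|H].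
  - destruct (constructive_indefinite_description _ H) as [u0 [H1 H2]]; simpl. eauto.
  - exfalso. apply H. exists v. auto.
Qed.

End Op.
Section Core.
Context {V : Type} (par : V -> option V) (lam : V -> Cplx).
Context (Hbdd : bounded_op (wshift par lam)).
Notation S := (wshift par lam).

Lemma l2_fin (f : V -> Cplx) L : NoDup L -> (forall x, ~ In x L -> f x = C0) -> l2 f.
Proof.
  intros ND Hz. eexists. apply has_sumR_finite; eauto. intros v Hv. rewrite Hz; auto. apply Cnorm2_C0.
Qed.

Lemma l2_zero : @l2 V (fun _ => C0).
Proof. apply (l2_fin _ []); [constructor| auto]. Qed.

Lemma inner_fin (g1 g2 : V -> Cplx) L : NoDup L -> (forall x, ~ In x L -> g2 x = C0) ->
  inner_is g1 g2 (sumC L (fun v => Cmul (g1 v) (Cconj (g2 v)))).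
Proof. intros ND Hz. apply has_sumC_finite; auto. intros v Hv. rewrite Hz; auto. ceq. Qed.

Lemma inner_fin1 (g1 g2 : V -> Cplx) L : NoDup L -> (forall x, ~ In x L -> g1 x = C0) ->
  inner_is g1 g2 (sumC L (fun v => Cmul (g1 v) (Cconj (g2 v)))).
Proof. intros ND Hz. apply has_sumC_finite; auto. intros v Hv. rewrite Hz; auto. ceq. Qed.

Lemma zero_inner (g : V -> Cplx) : inner_is g (fun _ => C0) C0.
Proof. apply (inner_fin g _ []); [constructor| auto]. Qed.

Lemma e_l2 (u : V) : l2 (e_ u).
Proof. eapply l2_of_norm, e_norm. Qed.

Lemma back : (exists gam : V -> R, forall u p, par u = Some p -> lam u <> C0 ->
  norm_is (S (e_ u)) (gam p)) -> adjS_S_preserves_ker S.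
Proof.
  intros [gam Hg].
  assert (Heq : forall u w p, par u = Some p -> par w = Some p -> lam u <> C0 -> lam w <> C0 ->
    nrm par lam Hbdd u = nrm par lam Hbdd w).
  { intros u w p Hu Hw Lu Lw.
    rewrite (norm_unique _ _ _ (nrm_spec par lam Hbdd u) (Hg u p Hu Lu)).
    rewrite (norm_unique _ _ _ (nrm_spec par lam Hbdd w) (Hg w p Hw Lw)). auto. }
  intros f [Hf Hadj0] h [Hh Hadj].
  assert (hu : forall u, h u = Cmul (mkC (nrm par lam Hbdd u * nrm par lam Hbdd u) 0) (f u)).
  { intros u. destruct (Hadj (e_ u) (e_l2 u)) as [s [H1 H2]].
    assert (A : has_sumC (fun v => Cmul (S (e_ u) v) (Cconj (S f v)))
       (Cmul (mkC (nrm par lam Hbdd u * nrm par lam Hbdd u) 0) (Cconj (f u)))).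
    { eapply has_sumC_ext; [| apply has_sumC_rscal, nn_sum].
      intros v. unfold wshift, nn, e_. destruct (par v) as [q|] eqn:E; dem; fixsome; try congruence; ceq. }
    pose proof (has_sumC_unique _ _ _ H1 A) as ->.
    pose proof (has_sumC_unique _ _ _ H2 (inner_fin1 (e_ u) h [u] ltac:(constructor; [simpl; tauto| constructor])
       ltac:(intros x Hx; unfold e_; dem; [subst; simpl in Hx; tauto| ceq]))) as E.
    simpl in E. unfold e_ in E. dem; [|congruence].
    destruct (h u) as [h1 h2], (f u) as [f1 f2].
    pose proof (f_equal Re E) as E1. pose proof (f_equal Im E) as E2. simpl in E1, E2.
    apply Cplx_eq; simpl; lra. }
  split; [exact Hh|]. split; [exact l2_zero|]. intros g Hgl. exists C0. split; [|apply zero_inner].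
  destruct (cc_bound par lam Hbdd) as [K HK].
  set (g' := fun p => Cmul (mkC (cc par lam Hbdd p * cc par lam Hbdd p) 0) (g p)).
  assert (Hg' : l2 g').
  { destruct Hgl as [sg Hsg].
    assert (Hcmp : forall v, 0 <= Cnorm2 (g' v) <= (K*K*(K*K)) * Cnorm2 (g v)).
    { intros v. unfold g'. specialize (HK v). set (c := cc par lam Hbdd v) in *.
      assert (EN : Cnorm2 (Cmul (mkC (c * c) 0) (g v)) = (c*c*(c*c)) * Cnorm2 (g v)) by (unfold Cnorm2; simpl; ring).
      rewrite EN. pose proof (Cnorm2_nonneg (g v)).
      assert (0 <= c * c <= K * K) by nra.
      assert (0 <= c*c*(c*c) <= K*K*(K*K)) by nra. nra. }
    destruct (has_sumR_compare (fun v => Cnorm2 (g' v)) (fun v => (K*K*(K*K)) * Cnorm2 (g v)) _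
      Hcmp (has_sumR_scal _ _ _ Hsg)) as [t Ht]. exists t; auto. }
  destruct Hadj0 as [_ Hadj0]. destruct (Hadj0 g' Hg') as [s [A1 A2]].
  rewrite (has_sumC_unique _ _ _ A2 (zero_inner g')) in A1.
  eapply has_sumC_ext; [|exact A1]. intros v. unfold wshift, g'.
  destruct (par v) as [p|] eqn:E; [|ceq]. rewrite hu.
  destruct (classic (lam v = C0)) as [Z|Z]; [rewrite Z; ceq|].
  rewrite (cc_eq par lam Hbdd Heq v p E Z). ceq.
Qed.

End Core.
Section Fwd.
Context {V : Type} (par : V -> option V) (lam : V -> Cplx).
Context (Hbdd : bounded_op (wshift par lam)).
Notation S := (wshift par lam).
Notation nrm := (nrm par lam Hbdd).

Lemma fwd : adjS_S_preserves_ker S -> forall u w p, par u = Some p -> par w = Some p ->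
  lam u <> C0 -> lam w <> C0 -> nrm u = nrm w.
Proof.
  intros HP u w p Hu Hw Lu Lw. destruct (classic (u = w)) as [->|Huw]; auto.
  set (f := fun x => if excluded_middle_informative (x = u) then Cconj (lam w)
     else if excluded_middle_informative (x = w) then Copp (Cconj (lam u)) else C0).
  set (h := fun x => Cmul (mkC (nrm x * nrm x) 0) (f x)).
  assert (ND : NoDup [u; w]) by (constructor; [simpl; intuition | constructor; [simpl; tauto| constructor]]).
  assert (fz : forall x, ~ In x [u; w] -> f x = C0).
  { intros x Hx. unfold f. dem; subst; simpl in Hx; intuition. }
  assert (hz : forall x, ~ In x [u; w] -> h x = C0).
  { intros x Hx. unfold h. rewrite fz; auto. ceq. }
  assert (fu : f u = Cconj (lam w)) by (unfold f; dem; congruence).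
  assert (fw : f w = Copp (Cconj (lam u))) by (unfold f; dem; congruence).
  clearbody f.
  assert (Hker : in_ker_adj S f).
  { split; [exact (l2_fin f _ ND fz)|]. split; [exact l2_zero|]. intros g _. exists C0.
    split; [|apply zero_inner].
    pose proof (inner_fin (S g) f _ ND fz) as A.
    replace C0 with (sumC [u; w] (fun v => Cmul (S g v) (Cconj (f v)))); auto.
    simpl. rewrite fu, fw. unfold wshift. rewrite Hu, Hw. ceq. }
  assert (Hadj : adj_val S (S f) h).
  { split; [exact (l2_fin h _ ND hz)|]. intros g Hg.
    exists (sumC [u; w] (fun v => Cmul (g v) (Cconj (h v)))). split; [|apply inner_fin; auto].
    pose proof (has_sumC_plus _ _ _ _
      (has_sumC_rscal _ _ (Cmul (g u) (Cconj (f u))) (nn_sum par lam Hbdd u))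
      (has_sumC_rscal _ _ (Cmul (g w) (Cconj (f w))) (nn_sum par lam Hbdd w))) as A.
    replace (sumC [u; w] (fun v => Cmul (g v) (Cconj (h v)))) with
      (Cadd (Cmul (mkC (nrm u * nrm u) 0) (Cmul (g u) (Cconj (f u))))
            (Cmul (mkC (nrm w * nrm w) 0) (Cmul (g w) (Cconj (f w))))).
    2:{ simpl. unfold h. ceq. }
    eapply has_sumC_ext; [|exact A]. intros v. unfold wshift, nn.
    destruct (par v) as [q|] eqn:E; dem; fixsome; try congruence;
    try (rewrite (fz q) by (simpl; intros [?|[?|[]]]; congruence)); ceq. }
  destruct (HP f Hker h Hadj) as [_ [_ Hk]].
  destruct (Hk (e_ p) (e_l2 p)) as [s [B1 B2]].
  rewrite (has_sumC_unique _ _ _ B2 (zero_inner (e_ p))) in B1.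
  pose proof (has_sumC_unique _ _ _ B1 (inner_fin (S (e_ p)) h _ ND hz)) as E.
  simpl in E. unfold h in E. rewrite fu, fw in E. unfold wshift, e_ in E. rewrite Hu, Hw in E.
  dem; try congruence.
  pose proof (Cnorm2_pos _ Lu) as Pu. pose proof (Cnorm2_pos _ Lw) as Pw.
  pose proof (f_equal Re E) as E1. pose proof (f_equal Im E) as E2. simpl in E1, E2.
  destruct (nrm_spec par lam Hbdd u) as [Nu _]. destruct (nrm_spec par lam Hbdd w) as [Nw _].
  set (X := nrm u * nrm u) in *. set (Y := nrm w * nrm w) in *.
  destruct (lam u) as [a b], (lam w) as [c d]. unfold Cnorm2 in Pu, Pw; simpl in Pu, Pw.
  set (P := a * c - b * d). set (Q := a * d + b * c).
  assert (E1' : (X - Y) * P = 0) by (unfold P; simpl in E1; nra).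
  assert (E2' : (X - Y) * Q = 0) by (unfold Q; simpl in E2; nra).
  assert (EP : P * P + Q * Q = (a*a+b*b)*(c*c+d*d)) by (unfold P, Q; ring).
  assert (HXY : (X - Y) * (P * P + Q * Q) = 0).
  { replace ((X-Y)*(P*P+Q*Q)) with (P*((X-Y)*P) + Q*((X-Y)*Q)) by ring. rewrite E1', E2'. ring. }
  assert (0 < P * P + Q * Q) by (rewrite EP; nra).
  apply Rmult_integral in HXY. destruct HXY as [HXY|]; [|lra].
  unfold X, Y in HXY. nra.
Qed.

End Fwd.
Theorem mainTheorem13 (V : Type) (par : V -> option V) (lam : V -> Cplx)
  (Htree : is_directed_tree par)
  (Hbdd : bounded_op (wshift par lam)) :
  (adjS_S_preserves_ker (wshift par lam) <->
   exists alpha : {v : V | Vplus (wshift par lam) v} -> R,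
     (forall w, 0 <= alpha w) /\
     forall (u p : V) (Hp : par u = Some p), lam u <> C0 ->
       forall Hpl : Vplus (wshift par lam) p,
         norm_is (wshift par lam (e_ u)) (alpha (exist _ p Hpl)))
  /\
  (leafless par -> (forall v, par v <> None -> lam v <> C0) ->
   (adjS_S_preserves_ker (wshift par lam) <->
    exists alpha : V -> R,
      (forall v, 0 <= alpha v) /\
      forall u p : V, par u = Some p ->
        norm_is (wshift par lam (e_ u)) (alpha p))).
Proof.
  destruct (cc_bound par lam Hbdd) as [K HK].
  split.
  - split.
    + intros HP. exists (fun s => cc par lam Hbdd (proj1_sig s)). split; [intros; apply HK|].
      intros u p Hp Hl Hpl. simpl.
      rewrite (cc_eq par lam Hbdd (fwd par lam Hbdd HP) u p Hp Hl). apply nrm_spec.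
    + intros [alpha [Hn Ha]]. apply (back par lam Hbdd).
      exists (fun p => match excluded_middle_informative (Vplus (wshift par lam) p) with
                       | left H => alpha (exist _ p H) | right _ => 0 end).
      intros u p Hp Hl. destruct (excluded_middle_informative (Vplus (wshift par lam) p)) as [H|H].
      * apply Ha; auto.
      * exfalso. apply H. eapply Vplus_child; eauto.
  - intros _ Hnz. split.
    + intros HP. exists (cc par lam Hbdd). split; [intros; apply HK|].
      intros u p Hp. assert (Hl : lam u <> C0) by (apply Hnz; congruence).
      rewrite (cc_eq par lam Hbdd (fwd par lam Hbdd HP) u p Hp Hl). apply nrm_spec.
    + intros [alpha [_ Ha]]. apply (back par lam Hbdd). exists alpha. intros; auto.
Qed.
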